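(* Let $\mathbf i\in\mathsf L^+$ and $\mathbf j\in\mathsf W^+$ with $\mathbf i\ge\mathbf j$, and assume $\mathbf i\neq\mathbf j$ if $|\mathbf i|$ is isotropic odd (i.e. $p(|\mathbf i|)=1$ and $(|\mathbf i|,|\mathbf i|)=0$). Then the concatenation $\mathbf i\mathbf j$ is dominant, i.e. $\mathbf i\mathbf j\in\mathsf W^+$.
   Context: Let $\mathfrak g$ be a basic Lie superalgebra with a fixed simple system $\Pi=\{\alpha_i\mid i\in I\}$, parity $p(i)\in\{0,1\}$, $Q^+=\bigoplus\mathbb Z_{\ge0}\alpha_i$ with parity $p(\sum c_i\alpha_i)=\sum c_ip(i)\bmod 2$, and $(\cdot,\cdot)$ the symmetric bilinear form with $(\alpha_i,\alpha_j)=d_ia_{ij}$ (symmetrized Cartan matrix). $\pi:=-1$, $q$ an indeterminate. $U_q$ is the positive half of the associated quantum supergroup (generated by $e_i$ of degree $\alpha_i$, parity $p(i)$). $\mathsf F$: the free associative $\mathbb Q(q)$-algebra on $I$ with basis the words $\mathbf i=(i_1,\dots,i_d)$, weight $|\mathbf i|=\sum\alpha_{i_s}$, parity $\sum p(i_s)$. Quantum shuffle product: $x\star\emptyset=\emptyset\star x=x$, $(xi)\star(yj)=(x\star(yj))i+\pi^{(p(x)+p(i))p(j)}q^{-(|x|+\alpha_i,\alpha_j)}((xi)\star y)j$ (homogeneous $x,y$, letters $i,j$, juxtaposition = concatenation). There is an injective algebra homomorphism $\Psi:U_q\to(\mathsf F,\star)$ with $\Psi(e_i)=i$; $\mathsf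 U:=\Psi(U_q)$ is the subalgebra generated by the letters. Fix a total order on $I$; order words lexicographically ($\mathbf i<\mathbf j$ if $\mathbf i$ is a proper prefix of $\mathbf j$ or at the first differing position $s$, $i_s<j_s$). $\max(x)$ is the largest word with nonzero coefficient in $x\neq0$. A word is dominant if it equals $\max(u)$ for some $u\in\mathsf U$; $\mathsf W^+$ is the set of dominant words. A nonempty word is Lyndon if it is smaller than all its proper right factors; $\mathsf L^+$ is the set of dominant Lyndon words. *)

(* Defs.v *)
From HB Require Import structures.
From mathcomp Require Import all_boot all_order all_algebra.
Set Implicit Arguments. Unset Strict Implicit. Unset Printing Implicit Defensive.
Import Order.TTheory GRing.Theory Num.Theory.
Local Open Scope ring_scope.

Definition Kq : Type := {fraction {poly rat}}.
Definition qq : Kq := FracField.tofrac ('X : {poly rat}).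

Section ShuffleAlgebra.
Variables (d : Order.disp_t) (I : finOrderType d).
(* parity of simple roots and symmetric bilinear form B i j = (alpha_i, alpha_j) *)
Variables (p : I -> bool) (B : I -> I -> int).

Definition wpar (w : seq I) : bool := odd (count p w).
Definition wform (a b : seq I) : int := \sum_(x <- a) \sum_(y <- b) B x y.

Definition twist (x : seq I) (j : I) : Kq :=
  (-1) ^+ (wpar x && p j) * qq ^ (- wform x [:: j]).

(* shc rw ra rb = coefficient of the word rev rw in (rev ra) star (rev rb), computed
   by the defining recursion
   (x i) star (y j) = (x star (y j)) i + pi^{..} q^{-(|x|+alpha_i,alpha_j)} ((x i) star y) j,
   x star [] = [] star x = x, read off on the last letter of the target word. *)
Fixpoint shc (rw ra rb : seq I) : Kq :=
  match rw with
  | [::] => ((ra == [::]) && (rb == [::]))%:R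
  | k :: rw' =>
      (if ra is i :: ra' then (i == k)%:R * shc rw' ra' rb else 0)
    + (if rb is j :: rb' then (j == k)%:R * twist (rev ra) j * shc rw' ra rb' else 0)
  end.

(* Elements of F are represented by their coefficient functions on words. *)
Definition Fel := seq I -> Kq.

Definition word_el (u : seq I) : Fel := fun w => (w == u)%:R.

Definition star (f g : Fel) : Fel := fun w =>
  \sum_(n < (size w).+1) \sum_(a : n.-tuple I) \sum_(b : (size w - n).-tuple I)
     f a * g b * shc (rev w) (rev a) (rev b).

Inductive inU : Fel -> Prop :=
  | inU_one : inU (word_el [::])
  | inU_letter i : inU (word_el [:: i])
  | inU_add f g : inU f -> inU g -> inU (fun w => f w + g w)
  | inU_scale c f : inU f -> inU (fun w => c * f w)
  | inU_star f g : inU f -> inU g -> inU (star f g).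

Fixpoint lex_lt (a b : seq I) : bool :=
  match a, b with
  | [::], [::] => false
  | [::], _ :: _ => true
  | _ :: _, [::] => false
  | x :: a', y :: b' => (x < y)%O || ((x == y) && lex_lt a' b')
  end.
Definition lex_le (a b : seq I) : bool := (a == b) || lex_lt a b.

Definition is_max (u : Fel) (w : seq I) : Prop :=
  u w != 0 /\ forall w', u w' != 0 -> lex_le w' w.

Definition dominant (w : seq I) : Prop := exists u, inU u /\ is_max u w.

Definition lyndon (w : seq I) : bool :=
  (w != [::]) && [forall k : 'I_(size w), (0 < k)%N ==> lex_lt w (drop k w)].

Definition isotropic_odd (w : seq I) : bool := wpar w && (wform w w == 0).

End ShuffleAlgebra.

(* Main.v *)
Require Import Defs.
From HB Require Import structures.
From mathcomp Require Import all_boot all_order all_algebra.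
Set Implicit Arguments. Unset Strict Implicit. Unset Printing Implicit Defensive.
Import Order.TTheory GRing.Theory Num.Theory.
From mathcomp Require Import zify.

Section Lex.
Variables (d : Order.disp_t) (I : finOrderType d).
Implicit Types a b c p t x y z w u v : seq I.

Fixpoint slt a b := match a, b with
  | x :: a', y :: b' => ((x < y)%O) || ((x == y) && slt a' b')
  | _, _ => false end.

Lemma lex_lt_irr a : lex_lt a a = false.
Proof. by elim: a => //= x a ->; rewrite ltxx eqxx. Qed.

Lemma lex_lt_trans a b c : lex_lt a b -> lex_lt b c -> lex_lt a c.
Proof.
elim: a b c => [|x a IH] [|y b] [|z c] //=.
case/orP=> [xy|/andP[/eqP <- ab]]; case/orP=> [yz|/andP[/eqP <- bc]].
- by rewrite (lt_trans xy yz).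
- by rewrite xy.
- by rewrite yz.
- by rewrite eqxx (IH _ _ ab bc) orbT.
Qed.

Lemma lex_total a b : [|| lex_lt a b, a == b | lex_lt b a].
Proof.
elim: a b => [|x a IH] [|y b] //=.
case: (ltgtP x y) => //= xy; rewrite ?orbT //.
subst y; rewrite eqseq_cons eqxx /=.
by case/or3P: (IH b) => ->; rewrite ?orbT.
Qed.

Lemma lex_lt_asym a b : lex_lt a b -> lex_lt b a -> False.
Proof. by move=> h1 h2; have := lex_lt_trans h1 h2; rewrite lex_lt_irr. Qed.

Lemma lex_leNgt a b : lex_le a b = ~~ lex_lt b a.
Proof.
rewrite /lex_le; case/or3P: (lex_total a b) => h.
- by rewrite h orbT; apply/esym/negP=> h'; apply: (lex_lt_asym h h').
- by rewrite h (eqP h) lex_lt_irr.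
- rewrite h /=; apply/negbTE/negP => /orP[/eqP e|h'].
    by subst; rewrite lex_lt_irr in h.
  exact: (lex_lt_asym h h').
Qed.

Lemma lex_le_refl a : lex_le a a.
Proof. by rewrite /lex_le eqxx. Qed.

Lemma lex_le_trans a b c : lex_le a b -> lex_le b c -> lex_le a c.
Proof.
rewrite /lex_le => /orP[/eqP->//|ab] /orP[/eqP<-|bc]; first by rewrite ab orbT.
by rewrite (lex_lt_trans ab bc) orbT.
Qed.

Lemma lex_lt_le_trans a b c : lex_lt a b -> lex_le b c -> lex_lt a c.
Proof. by move=> ab /orP[/eqP<-//|bc]; exact: lex_lt_trans ab bc. Qed.

Lemma lex_le_lt_trans a b c : lex_le a b -> lex_lt b c -> lex_lt a c.
Proof. by move=> /orP[/eqP->//|ab] bc; exact: lex_lt_trans ab bc. Qed.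

Lemma lex_le_antisym a b : lex_le a b -> lex_le b a -> a = b.
Proof.
move=> /orP[/eqP//|ab]; rewrite lex_leNgt ab //.
Qed.

Lemma lex_lt_le a b : lex_lt a b -> lex_le a b.
Proof. by move=> h; rewrite /lex_le h orbT. Qed.

Lemma lex_ltNge a b : lex_lt a b = ~~ lex_le b a.
Proof. by rewrite lex_leNgt negbK. Qed.

Lemma lex_lt_catl p a b : lex_lt (p ++ a) (p ++ b) = lex_lt a b.
Proof. by elim: p => //= x p ->; rewrite ltxx eqxx. Qed.

Lemma lex_le_catl p a b : lex_le (p ++ a) (p ++ b) = lex_le a b.
Proof. by rewrite /lex_le lex_lt_catl eqseq_cat // eqxx. Qed.

Lemma lex_lt_catr a t : t != [::] -> lex_lt a (a ++ t).
Proof. by elim: a => [|x a IH] /=; [case: t | move=> /IH ->; rewrite eqxx orbT]. Qed.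

Lemma lex_le_catr a t : lex_le a (a ++ t).
Proof.
case: (eqVneq t [::]) => [->|h]; first by rewrite cats0 lex_le_refl.
exact/lex_lt_le/lex_lt_catr.
Qed.

Lemma lex_le_cat_nil a t : lex_le (a ++ t) a -> t = [::].
Proof.
case: (eqVneq t [::]) => // h; rewrite lex_leNgt lex_lt_catr //.
Qed.

Lemma slt_catl p a b : slt (p ++ a) (p ++ b) = slt a b.
Proof. by elim: p => //= x p ->; rewrite ltxx eqxx. Qed.

Lemma slt_cat a b x y : slt a b -> slt (a ++ x) (b ++ y).
Proof.
elim: a b => [|u a IH] [|v b] //= /orP[->//|/andP[-> /IH ->]]; by rewrite orbT.
Qed.

Lemma slt_lex a b : slt a b -> lex_lt a b.
Proof. by elim: a b => [|u a IH] [|v b] //= /orP[->//|/andP[-> /IH ->]]; rewrite orbT. Qed.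

Lemma slt_le_false a b : slt a b -> lex_le b a -> False.
Proof. by move=> /slt_lex h; rewrite lex_leNgt h. Qed.

Lemma lex_slt a b : lex_lt a b -> size b <= size a -> slt a b.
Proof.
elim: a b => [|u a IH] [|v b] //= /orP[->//|/andP[-> /IH h]] s.
by rewrite h // orbT.
Qed.

Lemma lex_le_slt a b : lex_le a b -> size b <= size a -> a = b \/ slt a b.
Proof. by move=> /orP[/eqP->|/lex_slt h s]; [left|right; apply: h]. Qed.

Lemma slt_exists a b : slt a b ->
  exists p (c e : I) a' b', [/\ a = p ++ c :: a', b = p ++ e :: b' & (c < e)%O].
Proof.
elim: a b => [|u a IH] [|v b] //= /orP[h|/andP[/eqP <- /IH[p [c [e [a' [b' [-> -> h]]]]]]]].
  by exists [::], u, v, a, b.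
by exists (u :: p), c, e, a', b'.
Qed.

Lemma slt_trans a b c : slt a b -> slt b c -> slt a c.
Proof.
elim: a b c => [|x a IH] [|y b] [|z c] //=.
case/orP=> [xy|/andP[/eqP <- ab]]; case/orP=> [yz|/andP[/eqP <- bc]].
- by rewrite (lt_trans xy yz).
- by rewrite xy.
- by rewrite yz.
- by rewrite eqxx (IH _ _ ab bc) orbT.
Qed.

End Lex.

Section Shuf.
Variables (d : Order.disp_t) (I : finOrderType d).
Implicit Types a b c p t x y z w u v r ra rb : seq I.

Fixpoint il (rw ra rb : seq I) : bool :=
  match rw with
  | [::] => (ra == [::]) && (rb == [::])
  | k :: rw' =>
      (if ra is i :: ra' then (i == k) && il rw' ra' rb else false)
   || (if rb is j :: rb' then (j == k) && il rw' ra rb' else false)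
  end.

Definition sh w u v := il (rev w) (rev u) (rev v).

Lemma il_sym r ra rb : il r ra rb = il r rb ra.
Proof.
elim: r ra rb => [|k r IH] [|i ra] [|j rb] //=; rewrite ?andbT ?orbF //;
  try by rewrite IH.
by rewrite (IH ra) (IH (i :: ra)) orbC.
Qed.

Lemma il_size r ra rb : il r ra rb -> size r = size ra + size rb.
Proof.
elim: r ra rb => [|k r IH] ra rb /=.
  by case/andP=> /eqP -> /eqP ->.
case/orP.
- by case: ra => // i ra /andP[_ h]; rewrite (IH _ _ h).
- by case: rb => // j rb /andP[_ h]; rewrite (IH _ _ h) addnS.
Qed.

Lemma il_nilr r ra : il r ra [::] = (r == ra).
Proof.
elim: r ra => [|k r IH] [|i ra] //=; rewrite orbF IH eqseq_cons.
by rewrite eq_sym.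
Qed.

Lemma il_cat r1 r2 ra rb : il (r1 ++ r2) ra rb ->
  exists ra1 ra2 rb1 rb2, [/\ ra = ra1 ++ ra2, rb = rb1 ++ rb2,
     il r1 ra1 rb1 & il r2 ra2 rb2].
Proof.
elim: r1 ra rb => [|k r1 IH] ra rb /=.
  by move=> h; exists [::], ra, [::], rb.
case/orP.
- case: ra => // i ra /andP[/eqP <- /IH[ra1 [ra2 [rb1 [rb2 [-> -> h1 h2]]]]]].
  exists (i :: ra1), ra2, rb1, rb2; split => //=.
  by rewrite eqxx h1.
- case: rb => // j rb /andP[/eqP <- /IH[ra1 [ra2 [rb1 [rb2 [-> -> h1 h2]]]]]].
  exists ra1, ra2, (j :: rb1), rb2; split => //=.
  by rewrite eqxx h1 orbT.
Qed.

Lemma sh_sym w u v : sh w u v = sh w v u.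
Proof. exact: il_sym. Qed.

Lemma sh_size w u v : sh w u v -> size w = size u + size v.
Proof. by move/il_size; rewrite !size_rev. Qed.

Lemma sh_nilr w u : sh w u [::] -> w = u.
Proof. by rewrite /sh il_nilr => /eqP /(congr1 rev); rewrite !revK. Qed.

Lemma sh_nill w v : sh w [::] v -> w = v.
Proof. by rewrite sh_sym => /sh_nilr. Qed.

Lemma sh_cat w1 w2 u v : sh (w1 ++ w2) u v ->
  exists u1 u2 v1 v2, [/\ u = u1 ++ u2, v = v1 ++ v2, sh w1 u1 v1 & sh w2 u2 v2].
Proof.
rewrite /sh rev_cat => /il_cat[ra1 [ra2 [rb1 [rb2 [hu hv h1 h2]]]]].
exists (rev ra2), (rev ra1), (rev rb2), (rev rb1); split.
- by rewrite -rev_cat -hu revK.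
- by rewrite -rev_cat -hv revK.
- by rewrite !revK.
- by rewrite !revK.
Qed.


End Shuf.

Lemma rev_eq_nil (T : eqType) (s : seq T) : (rev s == [::]) = (s == [::]).
Proof. by case: s => // x s; rewrite rev_cons; case: (rev s). Qed.

Lemma sh_letter (d : Order.disp_t) (I : finOrderType d) k (u v : seq I) : sh [:: k] u v ->
  (u = [:: k] /\ v = [::]) \/ (u = [::] /\ v = [:: k]).
Proof.
rewrite /sh /=.
case: (lastP u) => [|u' i]; case: (lastP v) => [|v' j]; rewrite ?rev_rcons //= ?rev_eq_nil ?orbF ?andbF ?andbT.
- by move=> /andP[/eqP -> /eqP ->]; right.
- by move=> /andP[/eqP -> /eqP ->]; left.
- by [].
Qed.

Section Lyn.
Variables (d : Order.disp_t) (I : finOrderType d).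
Implicit Types a b c p q t x y z w u v r l m : seq I.

Lemma catl_inj p a b : p ++ a = p ++ b -> a = b.
Proof. by elim: p => //= x p IH [] /IH. Qed.

Lemma cat_prefix x y z w : x ++ y = z ++ w -> size z <= size x ->
  exists t, x = z ++ t.
Proof.
move=> h hs; exists (drop (size z) x).
have: take (size z) (x ++ y) = z by rewrite h take_size_cat.
by rewrite takel_cat // => e; rewrite -{1}e cat_take_drop.
Qed.

Lemma drop_catl n p s : n <= size p -> drop n (p ++ s) = drop n p ++ s.
Proof.
rewrite drop_cat leq_eqVlt => /orP[/eqP->|->//].
by rewrite ltnn subnn drop0 drop_size.
Qed.

Lemma lex_lt_cases a b : lex_lt a b -> slt a b \/ exists t, t != [::] /\ b = a ++ t.
Proof.
elim: a b => [|x a IH] [|y b] //=.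
  by move=> _; right; exists (y :: b).
case/orP=> [->|/andP[/eqP<- /IH[h|[t [h ->]]]]]; first by left.
- by left; rewrite eqxx h orbT.
- by right; exists t.
Qed.

Lemma lyndon_drop w k : lyndon w -> 0 < k < size w -> lex_lt w (drop k w).
Proof.
move=> /andP[_ /forallP h] /andP[k0 ks].
by have := h (Ordinal ks); rewrite /= k0.
Qed.

Lemma lyndonI w : w != [::] ->
  (forall k, 0 < k < size w -> lex_lt w (drop k w)) -> lyndon w.
Proof.
move=> h1 h2; rewrite /lyndon h1 /=; apply/forallP => k; apply/implyP => k0.
by apply: h2; rewrite k0 ltn_ord.
Qed.

Lemma lyndon_nil w : lyndon w -> w != [::].
Proof. by case/andP. Qed.

Lemma lyndon_slt w k : lyndon w -> 0 < k < size w -> slt w (drop k w).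
Proof.
move=> hw hk; apply: lex_slt (lyndon_drop hw hk) _.
by rewrite size_drop leq_subr.
Qed.

Lemma lyndon_ext p (c e : I) r : lyndon (p ++ c :: r) -> (c < e)%O ->
  lyndon (p ++ [:: e]).
Proof.
move=> hl ce; apply: lyndonI; first by case: p {hl}.
move=> m /andP[m0]; rewrite size_cat addn1 ltnS => mp.
have hs := lyndon_slt hl (k := m).
have {hs}: slt (p ++ c :: r) (drop m (p ++ c :: r)).
  apply: hs; rewrite m0 /= size_cat /= addnS ltnS.
  exact: leq_trans mp (leq_addr _ _).
rewrite !drop_catl //.
rewrite -{1 3}(cat_take_drop m p) -!catA.
set a := take m p; set b := drop m p.
have sa : size a = m by rewrite size_take; case: ltngtP mp => // ->.
move/slt_exists=> [q [e1 [f1 [s1 [s2 [E1 E2 lt1]]]]]].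
apply: slt_lex.
case: (ltngtP (size q) (size b)) => hq.
- have [t1 Eb] : exists t1, b = (q ++ [:: f1]) ++ t1.
    apply: (@cat_prefix b (c :: r) _ s2); first by rewrite E2 -catA.
    by rewrite size_cat addn1.
  have [t2 Eab] : exists t2, a ++ b = (q ++ [:: e1]) ++ t2.
    apply: (@cat_prefix (a ++ b) (c :: r) _ s1); first by rewrite -catA E1 -catA.
    by rewrite size_cat size_cat addn1 (leq_trans hq) // leq_addl.
  by rewrite catA Eab Eb -!catA /= slt_catl /= lt1.
- have [t Et] := @cat_prefix q (f1 :: s2) b (c :: r) (esym E2) (ltnW hq).
  move: E2; rewrite Et -catA => /catl_inj.
  case: t Et hq => [|c' t'] Et hq.
    by move: hq; rewrite Et cats0 ltnn.
  case=> ec _; subst c'.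
  have [t2 Eab] : exists t2, a ++ b = (b ++ [:: c]) ++ t2.
    apply: (@cat_prefix (a ++ b) (c :: r) _ (t' ++ e1 :: s1)).
      by rewrite -catA E1 Et -!catA.
    by rewrite !size_cat sa /=; lia.
  by rewrite catA Eab -!catA slt_catl /= ce.
- have Eqb : q = b /\ f1 = c.
    by move/eqP: E2; rewrite eq_sym eqseq_cat // => /andP[/eqP -> /eqP[->]].
  case: Eqb => Eqb Ef1; subst q f1.
  have [t2 Eab] : exists t2, a ++ b = (b ++ [:: e1]) ++ t2.
    apply: (@cat_prefix (a ++ b) (c :: r) _ s1).
      by rewrite -catA E1 -catA.
    by rewrite !size_cat sa /=; lia.
  by rewrite catA Eab -!catA slt_catl /= (lt_trans lt1 ce).
Qed.

End Lyn.

Section Lyn2.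
Variables (d : Order.disp_t) (I : finOrderType d).
Implicit Types a b c p q t x y z w u v r l m : seq I.

Lemma min_suffix w : 1 < size w -> exists k, 0 < k < size w /\
  forall k', 0 < k' < size w -> lex_le (drop k w) (drop k' w).
Proof.
move=> hw.
suff: forall n, exists k, 0 < k < size w /\
  forall k', 0 < k' < size w -> k' <= n.+1 -> lex_le (drop k w) (drop k' w).
  move=> /(_ (size w)) [k [hk H]]; exists k; split=> // k' hk'.
  apply: H => //; case/andP: hk' => _ /ltnW h; exact: leq_trans h (leqnSn _).
elim=> [|n [k [hk H]]].
  exists 1; rewrite hw; split=> // k' /andP[k0 _] k1.
  have -> : k' = 1 by apply/eqP; rewrite eqn_leq k1 k0.
  exact: lex_le_refl.
case: (boolP ((n.+2 < size w) && lex_lt (drop n.+2 w) (drop k w))) => [/andP[hn hlt]|hn].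
  exists n.+2; split; first by rewrite hn.
  move=> k' hk' k'le; case: (ltngtP k' n.+2) => hk2.
  - exact/lex_lt_le/(lex_lt_le_trans hlt)/H.
  - by rewrite ltnNge k'le in hk2.
  - by rewrite hk2 lex_le_refl.
exists k; split=> // k' hk' k'le; case: (ltngtP k' n.+2) => hk2.
- exact: H.
- by rewrite ltnNge k'le in hk2.
- subst k'; case/andP: hk' => _ hk'; move: hn; rewrite hk' /= lex_ltNge negbK //.
Qed.

Lemma lyndon_fact w : lyndon w -> 1 < size w ->
  exists l m, [/\ w = l ++ m, lyndon l & lyndon m].
Proof.
move=> hw hs; have [k [/andP[k0 kw] H]] := min_suffix hs.
exists (take k w), (drop k w); split; first by rewrite cat_take_drop.
- apply: lyndonI; first by rewrite -size_eq0 size_take kw -lt0n.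
  move=> t; rewrite size_take kw => /andP[t0 tk].
  set l := take k w; set m := drop k w.
  have ew : w = l ++ m by rewrite cat_take_drop.
  rewrite lex_ltNge; apply/negP => hle.
  have hdt : drop t w = drop t l ++ m by rewrite ew drop_catl // size_take kw ltnW.
  have hlw := lyndon_drop hw (k := t).
  have {hlw} hlw : lex_lt (l ++ m) (drop t l ++ m).
    by rewrite -hdt -ew; apply: hlw; rewrite t0 (ltn_trans tk kw).
  have st : size (drop t l) < size l by rewrite size_drop size_take kw; lia.
  case/orP: hle => [/eqP e|hlt].
    by move: st; rewrite e ltnn.
  case: (lex_lt_cases hlt) => [hs3|[r [r0 er]]].
    have := slt_cat m m hs3; move/slt_lex => h; exact: lex_lt_asym hlw h.
  move: hlw; rewrite {1}er -catA lex_lt_catl => hrm.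
  have : lex_le m (r ++ m).
    have -> : r ++ m = drop (size (drop t l)) w by rewrite ew {2}er -catA drop_size_cat.
    apply: H; rewrite size_drop size_take kw; apply/andP; split; first by lia.
    by rewrite (leq_ltn_trans (leq_subr _ _) kw).
  by rewrite lex_leNgt hrm.
- apply: lyndonI; first by rewrite -size_eq0 size_drop subn_eq0 -ltnNge.
  move=> t; rewrite size_drop => /andP[t0 tk].
  rewrite drop_drop.
  have := H (t + k); rewrite (_ : 0 < t + k < size w); last by apply/andP; split; lia.
  move=> /(_ isT) /orP[/eqP e|//].
  have := congr1 size e; rewrite !size_drop => hh; exfalso; clear -t0 tk hh.
  set n := size _ in tk; set n2 := size _ in hh; have en : n2 = n by []. lia.
Qed.

Lemma addn_eq_l n k : n = n + k -> k = 0.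
Proof. lia. Qed.

Lemma L1_step l m u1 u2 v1 v2 :
  lex_lt (l ++ m) m -> size l = size u1 + size v1 -> lex_le l u1 ->
  lex_le m u2 || lex_le m v2 ->
  lex_le (l ++ m) (u1 ++ u2) || lex_le (l ++ m) (v1 ++ v2).
Proof.
move=> hlm sz hl hm.
have su : size u1 <= size l by rewrite sz leq_addr.
case: (lex_le_slt hl su) => [e|hs].
  subst u1; have v10 : v1 = [::].
    by apply: size0nil; move: sz; apply: addn_eq_l.
  subst v1; case/orP: hm => h.
    by rewrite lex_le_catl h.
  by rewrite /= (lex_lt_le (lex_lt_le_trans hlm h)) orbT.
by rewrite (lex_lt_le (slt_lex (slt_cat m u2 hs))).
Qed.

Lemma L1 w u v : lyndon w -> sh w u v -> lex_le w u || lex_le w v.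
Proof.
move: {2}(size w) (leqnn (size w)) => n; elim: n w u v => [|n IH] w u v.
  by rewrite leqn0 size_eq0 => /eqP -> /lyndon_nil.
move=> hn hw hsh.
case: (leqP (size w) 1) => hs.
  case: w hw hsh hs {hn} => [/lyndon_nil//|k [|//]] _ /sh_letter[[-> ->]|[-> ->]] _.
  - by rewrite lex_le_refl.
  - by rewrite lex_le_refl orbT.
have [l [m [ew hl hm]]] := lyndon_fact hw hs.
have l0 := lyndon_nil hl; have m0 := lyndon_nil hm.
have sl : size l <= n.
  move: hn; rewrite ew size_cat; case: m m0 {ew hm} => // ? ? _ /=; lia.
have sm : size m <= n.
  move: hn; rewrite ew size_cat; case: l l0 {ew hl sl} => // ? ? _ /=; lia.
have hlm : lex_lt (l ++ m) m.
  have h := lyndon_drop hw (k := size l).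
  rewrite ew drop_size_cat // in h; apply: h.
  rewrite size_cat; case: l l0 {ew hl sl} => // ? ? _; case: m m0 {hm sm} => // ? ? _ /=; lia.
move: hsh; rewrite ew => /sh_cat[u1 [u2 [v1 [v2 [-> -> h1 h2]]]]].
have s1 := sh_size h1.
have Hm := IH _ _ _ sm hm h2.
case/orP: (IH _ _ _ sl hl h1) => h.
- exact: L1_step.
- rewrite orbC; apply: L1_step => //; first by rewrite addnC.
  by rewrite orbC.
Qed.

End Lyn2.

Section Comb.
Variables (d : Order.disp_t) (I : finOrderType d).
Implicit Types a b c p q t x y z w u v r l m i j : seq I.

Definition tle a i := lex_le (take (size i) a) i.

Lemma size_take_le n (s : seq I) : size (take n s) <= n.
Proof. by rewrite size_take; case: ltnP => // /ltnW. Qed.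

Lemma take_cat_ex n a b : exists t, take n (a ++ b) = take n a ++ t.
Proof.
rewrite take_cat; case: ltnP => h; first by exists [::]; rewrite cats0.
by exists (take (n - size a) b); rewrite (take_oversize h).
Qed.

Lemma tle_le a i : lex_le a i -> tle a i.
Proof.
move=> h; apply: lex_le_trans h.
by rewrite -{2}(cat_take_drop (size i) a) lex_le_catr.
Qed.

Lemma tle_catl a b i : tle (a ++ b) i -> tle a i.
Proof.
rewrite /tle; have [t ->] := take_cat_ex (size i) a b.
by apply: lex_le_trans; rewrite lex_le_catr.
Qed.

Lemma tle_pre a r : tle a (a ++ r).
Proof.
by rewrite /tle take_oversize ?lex_le_catr // size_cat leq_addr.
Qed.

Lemma D_lemma i z x y : lyndon i -> sh z x y -> tle x i -> tle y i -> tle z i.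
Proof.
move=> hi hsh hx hy; rewrite /tle lex_leNgt; apply/negP => hgt.
have := lex_slt hgt (size_take_le _ _).
move/slt_exists => [p [c [e [a' [b' [Ei Ez lt1]]]]]].
have hi' : lyndon (p ++ c :: a') by rewrite -Ei.
have hP := lyndon_ext hi' lt1.
have hiP : slt i (p ++ [:: e]) by rewrite Ei slt_catl /= lt1.
have sPi : size (p ++ [:: e]) <= size i by rewrite Ei !size_cat leq_add2l.
have ez : z = (p ++ [:: e]) ++ (b' ++ drop (size i) z).
  by rewrite -{1}(cat_take_drop (size i) z) Ez -!catA.
move: hsh; rewrite ez => /sh_cat[x1 [x2 [y1 [y2 [ex ey h1 h2]]]]].
have s1 := sh_size h1.
have key : forall x1 x2, tle (x1 ++ x2) i -> size x1 <= size (p ++ [:: e]) ->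
    lex_le (p ++ [:: e]) x1 -> False.
  move=> u1 u2 hu su hle.
  have hs : slt i u1.
    case: (lex_le_slt hle su) => [<-//|h]; exact: slt_trans hiP h.
  have su1 : size u1 <= size i := leq_trans su sPi.
  move: hu; rewrite /tle take_cat ltnNge su1 /=.
  by apply: slt_le_false; rewrite -[i]cats0; apply: slt_cat.
case/orP: (L1 hP h1) => h.
- by apply: (key x1 x2); rewrite -?ex // s1 leq_addr.
- by apply: (key y1 y2); rewrite -?ey // s1 leq_addl.
Qed.

Lemma NS_lemma i x y : lyndon i -> sh i x y -> tle x i -> tle y i ->
  x = [::] \/ y = [::].
Proof.
move=> hi hsh hx hy.
have s := sh_size hsh.
have key : forall u v, size i = size u + size v -> tle u i -> lex_le i u ->
    v = [::].
  move=> u v suv hu hle; case: (eqVneq v [::]) => // vn; exfalso.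
  have su : size u < size i by rewrite suv -{1}(addn0 (size u)) ltn_add2l lt0n size_eq0.
  case: (lex_le_slt hle (ltnW su)) => [e|h].
    by move: su; rewrite e ltnn.
  move: hu; rewrite /tle take_oversize; last exact: ltnW.
  by apply: slt_le_false.
case/orP: (L1 hi hsh) => h.
- by right; apply: (key x y).
- by left; apply: (key y x); rewrite // addnC.
Qed.

Lemma NSp_lemma i z x y : lyndon i -> sh (i ++ z) x y -> tle x i -> tle y i ->
  (exists x2, x = i ++ x2) \/ (exists y2, y = i ++ y2).
Proof.
move=> hi /sh_cat[x1 [x2 [y1 [y2 [ex ey h1 h2]]]]] hx hy.
have hx1 : tle x1 i by move: hx; rewrite ex => /tle_catl.
have hy1 : tle y1 i by move: hy; rewrite ey => /tle_catl.
case: (NS_lemma hi h1 hx1 hy1) => e; subst.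
- by right; exists y2; rewrite (sh_nill h1).
- by left; exists x2; rewrite (sh_nilr h1).
Qed.

Lemma MC_lemma i j x y w : lyndon i -> lex_le j i -> lex_le x i -> lex_le y j ->
  sh w x y -> lex_le w (i ++ j) /\ (w = i ++ j -> x = i /\ y = j).
Proof.
move=> hi hji hxi hyj hsh.
have hx : tle x i by apply: tle_le.
have hy : tle y i by apply/tle_le/(lex_le_trans hyj).
have := D_lemma hi hsh hx hy; rewrite /tle => /orP[/eqP ew|hlt].
- have ew' : w = i ++ drop (size i) w by rewrite -{1}(cat_take_drop (size i) w) ew.
  move: hsh; rewrite ew' => /sh_cat[x1 [x2 [y1 [y2 [ex ey h1 h2]]]]].
  have hx1 : tle x1 i by move: hx; rewrite ex => /tle_catl.
  have hy1 : tle y1 i by move: hy; rewrite ey => /tle_catl.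
  case: (NS_lemma hi h1 hx1 hy1) => e; subst.
  + have ey1 := sh_nill h1; subst y1.
    have y20 : y2 = [::].
      apply: (lex_le_cat_nil (a:=i) (t:=y2)); exact: lex_le_trans hyj hji.
    subst y2; rewrite cats0 in hyj.
    have eji : j = i by apply: lex_le_antisym.
    subst j; rewrite (sh_nilr h2); split; first by rewrite lex_le_catl.
    by move=> /catl_inj ->; rewrite cats0.
  + have ex1 := sh_nilr h1; subst x1.
    have x20 : x2 = [::] by apply: (lex_le_cat_nil (a:=i) (t:=x2)).
    subst x2; rewrite (sh_nill h2); split; first by rewrite lex_le_catl.
    by move=> /catl_inj ->; rewrite cats0.
- have hw : lex_lt w (i ++ j).
    case: (lex_lt_cases hlt) => [hs|[t [t0 et]]].
      by apply: slt_lex; rewrite -(cat_take_drop (size i) w); apply: slt_cat.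
    have sw : size w <= size i.
      move: (congr1 size et); rewrite size_cat size_take.
      case: ltnP => // _ e; exfalso; move: t0; rewrite -size_eq0.
      by move: e; rewrite -{1}(addn0 (size i)) => /eqP; rewrite eqn_add2l eq_sym => ->.
    move: et; rewrite take_oversize // => ->.
    by rewrite -catA; apply: lex_lt_catr; rewrite -size_eq0 size_cat; case: t t0.
  split; first exact: lex_lt_le.
  by move=> e; move: hw; rewrite e lex_lt_irr.
Qed.

End Comb.

Section Alg.
Local Open Scope ring_scope.
Variables (d : Order.disp_t) (I : finOrderType d) (p : I -> bool) (B : I -> I -> int).
Implicit Types (x y z w u v i j : seq I).

Lemma natb_nz (b : bool) : (b%:R : Kq) != 0 -> b.
Proof. by case: b; rewrite ?eqxx. Qed.

Lemma shc_il rw ra rb : shc p B rw ra rb != 0 -> il rw ra rb.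
Proof.
elim: rw ra rb => [|k rw IH] ra rb /=.
  by case: (_ && _); rewrite ?eqxx.
move=> h; apply/orP.
case: ra h => [|a ra]; case: rb => [|b rb] //=; rewrite ?add0r ?addr0.
- by rewrite eqxx.
- by rewrite !mulf_eq0 !negb_or => /andP[/andP[/natb_nz -> _] /IH ->]; right.
- by rewrite !mulf_eq0 !negb_or => /andP[/natb_nz -> /IH ->]; left.
- move=> h; case: (boolP ((a == k)%:R * shc p B rw ra (b :: rb) != 0)) => [|/negPn/eqP h0].
    by rewrite !mulf_eq0 !negb_or => /andP[/natb_nz -> /IH ->]; left.
  move: h; rewrite h0 add0r !mulf_eq0 !negb_or => /andP[/andP[/natb_nz -> _] /IH ->].
  by right.
Qed.

Lemma shc0 rw ra rb : ~~ il rw ra rb -> shc p B rw ra rb = 0.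
Proof. by move=> h; apply/eqP; apply: contraNT h => /shc_il. Qed.

Lemma twist_nil k : twist p B [::] k = 1.
Proof. by rewrite /twist /wpar /wform big_nil /= expr0 mul1r oppr0 expr0z. Qed.

Lemma shc_nilr r : shc p B r r [::] = 1.
Proof. by elim: r => //= k r ->; rewrite eqxx mulr1 addr0. Qed.

Lemma shc_nill r : shc p B r [::] r = 1.
Proof. by elim: r => //= k r ->; rewrite eqxx twist_nil !mulr1 add0r. Qed.

Lemma shc_cons k rw a ra b rb : shc p B (k :: rw) (a :: ra) (b :: rb) =
  (a == k)%:R * shc p B rw ra (b :: rb) + (b == k)%:R * twist p B (rev (a :: ra)) b * shc p B rw (a :: ra) rb.
Proof. by []. Qed.

Lemma phase2 i i' c i2 t : lyndon i -> i = rcons i' c -> i' = i2 ++ t ->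
  shc p B (rev (i ++ i2)) (rev i2) (rev i) = 1.
Proof.
move=> hi ei; elim/last_ind: i2 t => [|i2 c2 IH] t et.
  by rewrite cats0 shc_nill.
have ri : rev i = c :: rev i' by rewrite ei rev_rcons.
rewrite -rcons_cat !rev_rcons ri shc_cons eqxx mul1r -ri.
rewrite (IH (c2 :: t)); last by rewrite et cat_rcons.
rewrite shc0 ?mulr0 ?addr0 //.
apply/negP => hsh.
have hsh' : sh (i ++ i2) (rcons i2 c2) i' by rewrite /sh rev_rcons.
have ht1 : tle (rcons i2 c2) i.
  by rewrite [in X in tle _ X]ei et rcons_cat; apply: tle_pre.
have ht2 : tle i' i by rewrite [in X in tle _ X]ei -cats1; apply: tle_pre.
case: (NSp_lemma hi hsh' ht1 ht2) => [[x2 e]|[y2 e]].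
- have := congr1 size e; rewrite size_cat ei !size_rcons et size_cat size_rcons => e2.
  by move: e2; lia.
- have := congr1 size e; rewrite size_cat ei size_rcons => e2.
  by move: e2; lia.
Qed.

End Alg.

Section Alg2.
Local Open Scope ring_scope.
Variables (d : Order.disp_t) (I : finOrderType d) (p : I -> bool) (B : I -> I -> int).
Implicit Types (x y z w u v i j : seq I).

Definition Tw i j := \prod_(y <- j) twist p B i y.

Lemma phase1 i j j1 j2 : lyndon i -> lex_le j i -> j = j1 ++ j2 ->
  shc p B (rev (i ++ j1)) (rev i) (rev j1) = Tw i j1 + (j1 == i)%:R.
Proof.
move=> hi hji.
have [i' [c ei]] : exists i' c, i = rcons i' c.
  by case: (lastP i) hi => [/lyndon_nil//|i' c] _; exists i', c.
have ri : rev i = c :: rev i' by rewrite ei rev_rcons.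
elim/last_ind: j1 j2 => [|j1 k IH] j2 ej.
  rewrite cats0 shc_nilr /Tw big_nil.
  by rewrite ei; case: (i') => [|? ?] /=; rewrite addr0.
have hj1 : (j1 == i) = false.
  apply/negP => /eqP e; move: hji; rewrite ej e cat_rcons => /lex_le_cat_nil //.
rewrite -rcons_cat !rev_rcons ri shc_cons -ri revK eqxx mul1r.
rewrite (IH (k :: j2)); last by rewrite ej cat_rcons.
rewrite hj1 addr0 /Tw -cats1 big_cat big_seq1 /= -/(Tw i j1).
case: (eqVneq (rcons j1 k) i) => [e|ne].
  have [e1 e2] : j1 = i' /\ k = c.
    by move/eqP: e; rewrite ei eqseq_rcons => /andP[/eqP -> /eqP ->].
  subst j1 k; rewrite eqxx mul1r -ri (phase2 p B (t := [::]) hi ei) ?cats0 //.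
  by rewrite cats1 -ei eqxx addrC mulrC.
rewrite (shc0 p B (rw := rev (i ++ j1))) ?mulr0 ?add0r; last first.
  apply/negP => hsh.
  have hsh' : sh (i ++ j1) i' (rcons j1 k) by rewrite /sh rev_rcons.
  have ht1 : tle i' i by rewrite [in X in tle _ X]ei -cats1; apply: tle_pre.
  have ht2 : tle (rcons j1 k) i.
    by move: (tle_le hji); rewrite ej => /tle_catl.
  case: (NSp_lemma hi hsh' ht1 ht2) => [[x2 e]|[y2 e]].
  - have := congr1 size e; rewrite size_cat ei size_rcons => e2.
    by move: e2; lia.
  - move: hji; rewrite ej e -catA => /lex_le_cat_nil.
    move=> /(congr1 size); rewrite size_cat => /eqP; rewrite addn_eq0 size_eq0 => /andP[/eqP y20 _].
    by move: ne; rewrite e y20 cats0 eqxx.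
by rewrite cats1 (negbTE ne) addr0 mulrC.
Qed.

End Alg2.

Section Alg3.
Local Open Scope ring_scope.
Variables (d : Order.disp_t) (I : finOrderType d) (p : I -> bool) (B : I -> I -> int).
Implicit Types (i j : seq I).

Lemma qq_neq0 : qq != 0.
Proof. by rewrite /qq tofrac_eq0 polyX_eq0. Qed.

Lemma Tw_formula i j : Tw p B i j =
  (-1) ^+ (count (fun y => wpar p i && p y) j) * qq ^ (- \sum_(y <- j) wform B i [:: y]).
Proof.
elim: j => [|y j IH]; first by rewrite /Tw !big_nil /= expr0 mul1r oppr0 expr0z.
rewrite /Tw big_cons -/(Tw p B i j) IH big_cons /= exprD opprD expfzDr ?qq_neq0 //.
by rewrite /twist mulrACA.
Qed.

Lemma qX_eq (n : nat) (c : {poly rat}) : size c = 1%N -> qq ^+ n = tofrac c -> n = 0%N.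
Proof.
move=> sc; rewrite /qq -rmorphXn => /eqP; rewrite tofrac_eq => /eqP e.
by move: sc; rewrite -e size_polyXn => -[].
Qed.

Lemma qq_pow_pm1 (z : int) : (qq ^ z == 1) || (qq ^ z == -1) -> z = 0.
Proof.
have s1 : size (1 : {poly rat}) = 1%N by rewrite size_poly1.
have sN1 : size (-1 : {poly rat}) = 1%N by rewrite size_polyN size_poly1.
case: z => n.
- rewrite -exprnP => /orP[] /eqP e.
  + have e' : qq ^+ n = tofrac (1 : {poly rat}) by rewrite e rmorph1.
    by rewrite (qX_eq s1 e').
  + have e' : qq ^+ n = tofrac (-1 : {poly rat}) by rewrite e rmorphN1.
    by rewrite (qX_eq sN1 e').
- rewrite NegzE -invr_expz -exprnP => /orP[] /eqP e.
  + have e' : qq ^+ n.+1 = tofrac (1 : {poly rat}).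
      by rewrite -[qq ^+ _]invrK e invr1 rmorph1.
    by have := qX_eq s1 e'.
  + have e' : qq ^+ n.+1 = tofrac (-1 : {poly rat}).
      by rewrite -[qq ^+ _]invrK e invrN1 rmorphN1.
    by have := qX_eq sN1 e'.
Qed.

Lemma two_neq0 : (1 + 1 : Kq) != 0.
Proof.
have -> : (1 + 1 : Kq) = tofrac (2%:R) by rewrite rmorph_nat.
by rewrite tofrac_eq0 -polyC_natr polyC_eq0 pnatr_eq0.
Qed.

Lemma sum_wform i : \sum_(y <- i) wform B i [:: y] = wform B i i.
Proof.
rewrite /wform exchange_big /=; apply: eq_bigr => y _.
by apply: eq_bigr => x _; rewrite big_seq1.
Qed.

Lemma C_neq0 i j : lyndon i -> (isotropic_odd p B i -> i != j) ->
  Tw p B i j + (j == i)%:R != 0.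
Proof.
move=> hi hiso.
case: (eqVneq j i) => [e|ne]; last first.
  by rewrite addr0 Tw_formula mulf_neq0 ?signr_eq0 ?expfz_neq0 ?qq_neq0.
subst j; rewrite ?eqxx Tw_formula sum_wform.
set n := count _ _; set z := - wform B i i.
apply/negP => /eqP h.
have ss : ((-1) ^+ n : Kq) * (-1) ^+ n = 1 by rewrite -exprD -signr_odd addnn odd_double.
have h1 : (-1) ^+ n * qq ^ z = -1 by apply/eqP; rewrite -addr_eq0; apply/eqP.
have hq : qq ^ z = - (-1) ^+ n.
  by rewrite -[qq ^ z]mul1r -{1}ss -mulrA h1 mulrN1.
have z0 : z = 0.
  apply: qq_pow_pm1; rewrite hq -signr_odd; case: (odd n); rewrite /= ?expr1 ?opprK ?eqxx //.
  by rewrite orbT.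
move: h; rewrite z0 expr0z mulr1 => h.
have on : odd n.
  apply/negPn/negP => en; move: h; rewrite -signr_odd (negbTE en) expr0.
  by move/eqP; apply/negP; exact: two_neq0.
have wp : wpar p i.
  apply/negPn/negP => wn; move: on; rewrite /n.
  by rewrite (eq_count (a2 := pred0)) ?count_pred0 // => y; rewrite (negbTE wn).
have := hiso; rewrite /isotropic_odd wp /=.
have -> : wform B i i == 0 by rewrite -oppr_eq0 -/z z0.
by move=> /(_ isT); rewrite eqxx.
Qed.

End Alg3.

Section Star.
Local Open Scope ring_scope.
Variables (d : Order.disp_t) (I : finOrderType d) (p : I -> bool) (B : I -> I -> int).

Lemma sum_nz (T : finType) (F : T -> Kq) : \sum_x F x != 0 -> exists x, F x != 0.
Proof.
move=> h; case: (boolP [exists x, F x != 0]) => [/existsP//|/existsPn H].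
by move: h; rewrite big1 ?eqxx // => x _; move/negPn/eqP: (H x).
Qed.

Lemma star_nz (f g : Fel I) w : star p B f g w != 0 ->
  exists a b, [/\ f a != 0, g b != 0 & sh w a b].
Proof.
rewrite /star => /sum_nz [n /sum_nz [a /sum_nz [b]]].
rewrite !mulf_eq0 !negb_or => /andP[/andP[fa gb] /shc_il h].
exists (tval a), (tval b); split; [exact: fa | exact: gb | exact: h].
Qed.

Lemma star_single (f g : Fel I) (i j : seq I) :
  (forall a b, f a != 0 -> g b != 0 ->
     shc p B (rev (i ++ j)) (rev a) (rev b) != 0 -> a = i /\ b = j) ->
  star p B f g (i ++ j) = f i * g j * shc p B (rev (i ++ j)) (rev i) (rev j).
Proof.
move=> H; rewrite /star.
have hn : (size i < (size (i ++ j)).+1)%N by rewrite size_cat ltnS leq_addr.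
rewrite (bigD1 (Ordinal hn)) //= [X in _ + X]big1 ?addr0; last first.
  move=> n hn'; apply: big1 => a _; apply: big1 => b _.
  apply/eqP; apply: contraR hn' => hz.
  move: hz; rewrite !mulf_eq0 !negb_or => /andP[/andP[fa gb] hs].
  have [ea _] := H _ _ fa gb hs.
  have := size_tuple a; rewrite ea => es.
  by apply/eqP/val_inj => /=; rewrite -es.
rewrite (bigD1 (in_tuple i)) //= [X in _ + X]big1 ?addr0; last first.
  move=> a ha; apply: big1 => b _.
  apply/eqP; apply: contraR ha => hz.
  move: hz; rewrite !mulf_eq0 !negb_or => /andP[/andP[fa gb] hs].
  have [ea _] := H _ _ fa gb hs.
  by apply/eqP/val_inj.
have hb : size j == (size (i ++ j) - size i)%N by rewrite size_cat addKn.
rewrite (bigD1 (Tuple hb)) //= [X in _ + X]big1 ?addr0 //.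
move=> b hb'; apply/eqP; apply: contraR hb' => hz.
move: hz; rewrite !mulf_eq0 !negb_or => /andP[/andP[fa gb] hs].
have [_ eb] := H _ _ fa gb hs.
by apply/eqP/val_inj.
Qed.

End Star.

Unset Implicit Arguments.

Theorem mainTheorem8 (d : Order.disp_t) (I : finOrderType d)
  (p : I -> bool) (B : I -> I -> int) (Bsym : forall x y, B x y = B y x)
  (i j : seq I) :
  lyndon i -> dominant p B i -> dominant p B j -> lex_le j i ->
  (isotropic_odd p B i -> i != j) ->
  dominant p B (i ++ j).
Proof.
move=> hi [u [hu [ui umax]]] [v [hv [vj vmax]]] hji hiso.
exists (star p B u v); split; first exact: inU_star.
have key : forall w a b, u a != 0%R -> v b != 0%R -> il (rev w) (rev a) (rev b) ->
    lex_le w (i ++ j) /\ (w = i ++ j -> a = i /\ b = j).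
  move=> w a b ua vb hs.
  have hs' : sh w a b by rewrite /sh.
  exact: (MC_lemma hi hji (umax _ ua) (vmax _ vb) hs').
split.
- rewrite star_single; last first.
    move=> a b ua vb hs.
    exact: ((key (i ++ j) a b ua vb (shc_il hs)).2 erefl).
  rewrite (phase1 p B (j2 := [::]) hi hji (esym (cats0 j))).
  apply: mulf_neq0; first exact: (mulf_neq0 ui vj).
  exact: (C_neq0 hi hiso).
- move=> w /star_nz [a [b [ua vb hs]]].
  exact: (key w a b ua vb hs).1.
Qed.
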